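(* Let $n_u,N\ge1$, $n=Nn_u$, and write $\mathbf{u}\in\mathbb{R}^n$ as $\mathbf{u}=(u_1,\dots,u_N)$ with $u_\ell\in\mathbb{R}^{n_u}$. Let $\varepsilon>0$ and $$\mathcal{U}=\{\mathbf{u}\in\mathbb{R}^n:\ \|u_\ell\|_2^2\le\varepsilon,\ \ell=1,\dots,N\}.$$ Let $\mathcal{P}$ be a finite index set of pairs $(i,j)$, and for each $(i,j)\in\mathcal{P}$ let $H^{[ij]}\in\mathbb{R}^{n\times n}$ be a nonzero symmetric positive semidefinite matrix, $c^{[ij]}\in\mathbb{R}^n$ in the column space of $H^{[ij]}$, $h^{[ij]}\in\mathbb{R}$, $w_{ij}\ge0$. Define $q_{ij}(\mathbf{z})=\mathbf{z}^\top H^{[ij]}\mathbf{z}+(c^{[ij]})^\top\mathbf{z}+\tfrac14(c^{[ij]})^\top (H^{[ij]})^{+}c^{[ij]}$, $D_{ij}=\{\mathbf{z}: q_{ij}(\mathbf{z})\le\tfrac12\}$, and $F(\mathbf{u})=\sum_{(i,j)\in\mathcal{P}}w_{ij}\exp(-\mathbf{u}^\top H^{[ij]}\mathbf{u}-(c^{[ij]})^\top\mathbf{u}-h^{[ij]})$. Suppose that for each $(i,j)\in\mathcal{P}$, $0\in D_{ij}$, and let $\mathbf{z}^*_{ij}$ be a minimizer of $\mathbf{z}^\top\mathbf{z}$ subject to $q_{ij}(\mathbf{z})=\tfrac12$ (such a minimizer exists). Then: (i) for each $(i,j)$, every $\mathbf{u}$ with $\|\mathbf{u}\|_2\le\|\mathbf{z}^*_{ij}\|_2$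 belongs to $D_{ij}$; (ii) if $\sqrt{\varepsilon N}\le\|\mathbf{z}^*_{ij}\|_2$ for every $(i,j)\in\mathcal{P}$, then $\mathcal{U}\subseteq D_{ij}$ for all $(i,j)$ and $F$ is concave on $\mathcal{U}$.
   Context: $(H)^{+}$ denotes the Moore–Penrose pseudoinverse. In the application, $F$ is the weighted sum of Bhattacharyya coefficients bounding the predicted misdiagnosis probability, with weights $w_{ij}=\sqrt{P_k(M^{[i]})P_k(M^{[j]})}$, and $\mathcal{U}$ is an input energy constraint set over a horizon of length $N$. *)

(* Defs.v *)
From HB Require Import structures.
From mathcomp Require Import all_boot all_order all_algebra.
From mathcomp Require Import reals exp.
From mathcomp Require Import all_classical all_reals all_analysis.
Set Implicit Arguments.
Unset Strict Implicit.
Unset Printing Implicit Defensive.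
Import Order.TTheory GRing.Theory Num.Theory.
Local Open Scope ring_scope.

Definition sc (R : pzRingType) (A : 'M[R]_1) : R := A 0 0.

Definition qform (R : pzRingType) n (H : 'M[R]_n) (z : 'cV[R]_n) : R :=
  sc (z^T *m H *m z).

Definition dotv (R : pzRingType) n (a b : 'cV[R]_n) : R := sc (a^T *m b).

Definition norm2 (R : rcfType) n (z : 'cV[R]_n) : R := Num.sqrt (dotv z z).

Definition is_sym_psd (R : realFieldType) n (H : 'M[R]_n) : Prop :=
  H^T = H /\ forall z : 'cV[R]_n, 0 <= qform H z.

(* Moore-Penrose pseudoinverse (the four Penrose conditions, which
   characterise it uniquely) *)
Definition is_MP_pinv (R : pzRingType) n (H P : 'M[R]_n) : Prop :=
  [/\ H *m P *m H = H, P *m H *m P = P,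
      (H *m P)^T = H *m P & (P *m H)^T = P *m H].

Definition qfun (R : fieldType) n (H Hp : 'M[R]_n) (c z : 'cV[R]_n) : R :=
  qform H z + dotv c z + 4^-1 * qform Hp c.

Definition blk (R : Type) (N nu : nat) (u : 'cV[R]_(N * nu)) (l : 'I_N)
  : 'cV[R]_nu := \col_k u (mxvec_index l k) 0.

Definition Uset (R : rcfType) (N nu : nat) (eps : R) (u : 'cV[R]_(N * nu))
  : Prop := forall l : 'I_N, dotv (blk u l) (blk u l) <= eps.

Definition concave_on (R : realFieldType) n (S : 'cV[R]_n -> Prop)
  (f : 'cV[R]_n -> R) : Prop :=
  forall u v, S u -> S v -> forall t : R, 0 <= t <= 1 ->
    t * f u + (1 - t) * f v <= f (t *: u + (1 - t) *: v).

Definition Ffun (R : realType) (I : finType) n (w h : I -> R)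
  (H : I -> 'M[R]_n) (c : I -> 'cV[R]_n) (u : 'cV[R]_n) : R :=
  \sum_(k : I) w k * expR (- qform (H k) u - dotv (c k) u - h k).

(* Main.v *)
Require Import Defs.
From HB Require Import structures.
From mathcomp Require Import all_boot all_order all_algebra.
From mathcomp Require Import reals exp.
From mathcomp Require Import all_classical all_reals all_analysis.
From mathcomp Require Import ring lra.
Import Order.TTheory GRing.Theory Num.Theory numFieldNormedType.Exports.
Local Open Scope ring_scope.
Section S.
Context {R : realType}.
Definition mk01 (t : R) (H : 0 <= t <= 1) : {i01 R}.
Proof. apply: (@Itv.mk _ _ _ t). rewrite /Itv.num_sem /=.
case/andP: H => H0 H1.
by rewrite in_itv /= (ger0_real H0) /= H0 H1.
Defined.

Lemma disc (a b c : R) : 0 <= a -> (forall s, 0 <= a * s ^+ 2 + b * s + c) ->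
  b ^+ 2 <= 4 * a * c.
Proof.
move=> a0 pos; have [a0'|] := eqVneq a 0.
  subst a; have [->|b0] := eqVneq b 0; first by rewrite expr0n /= mulr0 mul0r.
  have := pos (- (`|c| + 1) / b).
  rewrite mul0r add0r mulrCA divff // mulr1.
  have := ler_norm c; lra.
move=> an0; have ap : 0 < a by rewrite lt_neqAle eq_sym an0.
have := pos (- b / (2 * a)).
have -> : a * (- b / (2 * a)) ^+ 2 + b * (- b / (2 * a)) + c
   = c - b ^+ 2 / (4 * a).
  by field; rewrite an0.
rewrite subr_ge0 ler_pdivrMr; last lra.
lra.
Qed.

Lemma conc1 (al be ga t : R) : 0 <= al ->
  (forall s, 0 <= al * s ^+ 2 + be * s + ga) ->
  ga <= 2^-1 -> al + be + ga <= 2^-1 -> 0 <= t <= 1 ->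
  t * expR (- (al + be + ga)) + (1 - t) * expR (- ga)
  <= expR (- (al * t ^+ 2 + be * t + ga)).
Proof.
move=> al0 pos g0 g1 t01.
have dsc := @disc _ _ _ al0 pos.
pose P : {poly R} := al *: 'X^2 + be *: 'X + ga%:P.
have PE s : P.[s] = al * s ^+ 2 + be * s + ga by rewrite /P !hornerE.
pose N := - P.
have NE s : N.[s] = - (al * s ^+ 2 + be * s + ga) by rewrite /N hornerN PE.
have N1E s : (deriv N).[s] = - (2 * al * s + be).
  rewrite /N /P !poly.derivE !hornerE /=; ring.
have N2E s : (deriv (deriv N)).[s] = - (2 * al).
  rewrite /N /P !poly.derivE !hornerE /=; ring.
pose E := (@expR R \o horner N).
have dE x : is_derive x (1:R) E (expR N.[x] * (deriv N).[x]).
  by apply: is_derive1_comp.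
pose g := fun x => E x * (deriv N).[x].
have dDE x : is_derive x (1:R) g
   (E x * (deriv (deriv N)).[x] + (deriv N).[x] * (E x * (deriv N).[x])).
  exact: (@is_deriveM R R E (horner (deriv N)) x 1 _ _ (dE x) (is_derive_poly _ _)).
pose f : R -> R^o := - E.
have df x : is_derive x (1:R) f (- g x) by apply: is_deriveN.
have Df : 'D_1 f = - g.
  by apply/funext => x; have [_ ->] := df x.
have ddf x : is_derive x (1:R) ('D_1 f) (- (E x * (deriv (deriv N)).[x] + (deriv N).[x] * (E x * (deriv N).[x]))).
  by rewrite Df; apply: is_deriveN.
have t01' : 0 <= 1 - t <= 1 by lra.
have cf : forall x : R, {for x, continuous f}.
  move=> x; apply: differentiable_continuous; apply/derivable1_diffP.
  by case: (df x).
have DD : forall x : R, 0 < x < 1 -> 0 <= 'D_1 ('D_1 f) x.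
  move=> x /andP[x0 x1].
  have [_ ->] := ddf x.
  rewrite N2E N1E /E /=.
  have ep := expR_gt0 N.[x].
  have Px : al * x ^+ 2 + be * x + ga <= 2^-1.
    have : al * x ^+ 2 <= al * x by rewrite ler_wpM2l // expr2 ger_pMl //; lra.
    nra.
  have key : (2 * al * x + be) ^+ 2 <= 2 * al by nra.
  nra.
have cl : (f x @[x --> 1^'-] --> f 1)%classic by exact/cvg_at_left_filter/cf.
have cr : (f x @[x --> 0^'+] --> f 0)%classic by exact/cvg_at_right_filter/cf.
have hd : {in `]0, 1[, forall x : R, derivable f x 1} by move=> x _; case: (df x).
have hdd : {in `]0, 1[, forall x : R, derivable ('D_1 f) x 1} by move=> x _; case: (ddf x).
have := @second_derivative_convex R f 0 1 DD cl cr hd hdd (@mk01 _ t01') ler01.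
have fE y : f y = - expR (- (al * y ^+ 2 + be * y + ga)) by rewrite -NE.
rewrite !convRE /= !fE /unstable.onem.
have -> : 1 - (1 - t) = t by ring.
have -> : (1 - t) * 0 + t * 1 = t by ring.
have -> : al * 0 ^+ 2 + be * 0 + ga = ga by ring.
have -> : al * 1 ^+ 2 + be * 1 + ga = al + be + ga by ring.
lra.
Qed.

End S.
Section Alg.
Context {R : realType}.
Context {n : nat}.
Implicit Types (H P : 'M[R]_n) (x y z c : 'cV[R]_n).

Definition bil H x y := sc (x^T *m H *m y).

Lemma scD (A B : 'M[R]_1) : sc (A + B) = sc A + sc B.
Proof. by rewrite /sc mxE. Qed.
Lemma scZ a (A : 'M[R]_1) : sc (a *: A) = a * sc A.
Proof. by rewrite /sc mxE. Qed.
Lemma scT (A : 'M[R]_1) : sc (A^T) = sc A.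
Proof. by rewrite /sc mxE. Qed.

Lemma bilDl H x y z : bil H (x + y) z = bil H x z + bil H y z.
Proof. by rewrite /bil raddfD /= !mulmxDl scD. Qed.
Lemma bilDr H x y z : bil H z (x + y) = bil H z x + bil H z y.
Proof. by rewrite /bil !mulmxDr scD. Qed.
Lemma bilZl H a x y : bil H (a *: x) y = a * bil H x y.
Proof. by rewrite /bil linearZ /= -!scalemxAl scZ. Qed.
Lemma bilZr H a x y : bil H x (a *: y) = a * bil H x y.
Proof. by rewrite /bil -!scalemxAr scZ. Qed.
Lemma bilC H x y : H^T = H -> bil H x y = bil H y x.
Proof.
by move=> HT; rewrite /bil -scT !trmx_mul trmxK HT mulmxA.
Qed.
Lemma bil0l H y : bil H 0 y = 0.
Proof. by rewrite /bil linear0 !mul0mx /sc mxE. Qed.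
Lemma bil0r H y : bil H y 0 = 0.
Proof. by rewrite /bil !mulmx0 /sc mxE. Qed.
Lemma qformE H x : qform H x = bil H x x.
Proof. by []. Qed.

Lemma qformD H x y : H^T = H ->
  qform H (x + y) = qform H x + qform H y + 2 * bil H x y.
Proof.
move=> HT; rewrite !qformE bilDl !bilDr (bilC H y x HT); ring.
Qed.
Lemma qformZ H a x : qform H (a *: x) = a ^+ 2 * qform H x.
Proof. by rewrite !qformE bilZl bilZr; ring. Qed.

Lemma dotvD x y z : dotv z (x + y) = dotv z x + dotv z y.
Proof. by rewrite /dotv mulmxDr scD. Qed.
Lemma dotvZ a x z : dotv z (a *: x) = a * dotv z x.
Proof. by rewrite /dotv -scalemxAr scZ. Qed.
Lemma dotv0 z : dotv z 0 = 0.
Proof. by rewrite /dotv mulmx0 /sc mxE. Qed.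
Lemma dotvC x y : dotv x y = dotv y x.
Proof. by rewrite /dotv -scT trmx_mul trmxK. Qed.
Lemma dotvE x y : dotv x y = \sum_i x i 0 * y i 0.
Proof. by rewrite /dotv /sc mxE; apply: eq_bigr => i _; rewrite mxE. Qed.
Lemma dotv_ge0 x : 0 <= dotv x x.
Proof. by rewrite dotvE sumr_ge0 // => i _; rewrite -expr2 sqr_ge0. Qed.
Lemma dotvZZ a x : dotv (a *: x) (a *: x) = a ^+ 2 * dotv x x.
Proof. by rewrite dotvZ dotvC dotvZ; ring. Qed.

Lemma bilE H x y : bil H x y = \sum_j \sum_i x i 0 * H i j * y j 0.
Proof.
rewrite /bil /sc mxE; apply: eq_bigr => j _; rewrite mxE big_distrl /=.
by apply: eq_bigr => i _; rewrite !mxE.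
Qed.

Lemma qfun_shift H Hp c z : is_sym_psd H -> is_MP_pinv H Hp ->
  (exists d, c = H *m d) ->
  qfun H Hp c z = qform H (z + 2^-1 *: (Hp *m c)).
Proof.
move=> [HT _] [P1 P2 P3 P4] [d cd].
have HHpc : H *m (Hp *m c) = c by rewrite cd mulmxA mulmxA P1.
rewrite qformD // qformZ bilZr /qfun.
have e1 : bil H z (Hp *m c) = dotv c z.
  by rewrite /bil -mulmxA HHpc dotvC.
have e2 : qform H (Hp *m c) = qform Hp c.
  rewrite qformE /bil -mulmxA HHpc -/(dotv _ _) dotvC /dotv /qform.
  by rewrite mulmxA.
rewrite e1 e2; by field.
Qed.

Lemma qfun_ge0 H Hp c z : is_sym_psd H -> is_MP_pinv H Hp ->
  (exists d, c = H *m d) -> 0 <= qfun H Hp c z.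
Proof. by move=> S M E; rewrite qfun_shift //; case: S. Qed.

Lemma qfun0 H Hp c : qfun H Hp c 0 = 4^-1 * qform Hp c.
Proof. by rewrite /qfun qformE bil0l dotv0 !add0r. Qed.

Lemma qfun_line H Hp c v w s : H^T = H ->
  qfun H Hp c (v + s *: w) =
  qform H w * s ^+ 2 + (2 * bil H v w + dotv c w) * s + qfun H Hp c v.
Proof.
move=> HT; rewrite /qfun qformD // qformZ bilZr dotvD dotvZ; ring.
Qed.

Lemma qfun_scale H Hp c u s :
  qfun H Hp c (s *: u) =
  qform H u * s ^+ 2 + dotv c u * s + qfun H Hp c 0.
Proof. rewrite qfun0 /qfun qformZ dotvZ; ring. Qed.

End Alg.
Section K.
Context {R : realType}.
Context {n : nat}.

Lemma cont_sum (I : Type) (s : seq I) (F : I -> 'rV[R]_n -> R) :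
  (forall i, continuous (F i)) -> continuous (fun r => \sum_(i <- s) F i r).
Proof.
move=> cF; elim: s => [|a s IH].
  rewrite (_ : (fun r => _) = cst 0); first exact: cst_continuous.
  by apply/funext => r; rewrite big_nil.
rewrite (_ : (fun r => _) = F a + (fun r => \sum_(i <- s) F i r)).
  by move=> x; exact: continuousD (cF a x) (IH x).
by apply/funext => r; rewrite big_cons.
Qed.

Lemma cont_coord i : continuous (fun r : 'rV[R]_n => r 0 i).
Proof. exact: coord_continuous. Qed.

Lemma cont_mul (f g : 'rV[R]_n -> R) : continuous f -> continuous g ->
  continuous (fun r => f r * g r).
Proof. by move=> cf cg x; exact: (continuousM (cf x) (cg x)). Qed.

Lemma cont_cst (a : R) : continuous (fun r : 'rV[R]_n => a).
Proof. exact: cst_continuous. Qed.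
End K.
Section M.
Context {R : realType}.
Context {n : nat}.
Implicit Types (H Hp : 'M[R]_n) (c u v z : 'cV[R]_n).
Local Open Scope classical_set_scope.
Local Open Scope ring_scope.

Lemma ivt_quad (A B C b : R) : 0 <= b -> C <= 2^-1 ->
  2^-1 <= A * b ^+ 2 + B * b + C ->
  exists2 s, 0 <= s <= b & A * s ^+ 2 + B * s + C = 2^-1.
Proof.
move=> b0 c1 c2.
pose P : {poly R} := A *: 'X^2 + B *: 'X + C%:P.
have PE s : P.[s] = A * s ^+ 2 + B * s + C by rewrite /P !hornerE.
have cP : {within `[0, b], continuous (horner P)}.
  by apply: continuous_subspaceT => x; exact: continuous_horner.
have [|s s01 Ps] := @IVT R (horner P) 0 b 2^-1 b0 cP.
  rewrite !PE expr0n /= !mulr0 !add0r.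
  apply/andP; split.
    by rewrite ge_min c1.
  by rewrite le_max c2 orbT.
exists s; last by rewrite -PE.
by move: s01; rewrite in_itv.
Qed.

Lemma delta_bil H i j : bil H (delta_mx i 0) (delta_mx j 0) = H i j.
Proof.
rewrite /bil trmx_delta -rowE -colE /sc !mxE //.
Qed.

Lemma exists_pos H : H != 0 -> is_sym_psd H -> exists v, 0 < qform H v.
Proof.
move=> Hn0 [HT Hpsd].
case: (pselect (exists v, 0 < qform H v)) => // nex.
have q0 v : qform H v = 0.
  apply/eqP; rewrite eq_le Hpsd andbT leNgt; apply/negP => h.
  by apply: nex; exists v.
case/eqP: Hn0; apply/matrixP => i j; rewrite mxE -delta_bil.
have := qformD H (delta_mx i 0) (delta_mx j 0) HT.
rewrite !q0 => e; lra.
Qed.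

Lemma exists_level H Hp c : H != 0 -> is_sym_psd H -> qfun H Hp c 0 <= 2^-1 ->
  exists z, qfun H Hp c z = 2^-1.
Proof.
move=> Hn0 Hs q0.
have [v vp] := exists_pos H Hn0 Hs.
set A := qform H v. set B := dotv c v. set C := qfun H Hp c 0.
pose b := (`|B| + `|C| + 1) / A + 1.
have Ab : A * b = `|B| + `|C| + 1 + A by rewrite /b mulrDr mulrCA divff ?mulr1 // gt_eqF.
have b1 : 1 <= b.
  rewrite /b lerDr divr_ge0 //; last exact: ltW.
have [s _ es] : exists2 s, 0 <= s <= b & A * s ^+ 2 + B * s + C = 2^-1.
  apply: ivt_quad => //; first lra.
  have nB := ler_norm B. have nB' : - B <= `|B| by rewrite -normrN ler_norm.
  have nC : - C <= `|C| by rewrite -normrN ler_norm.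
  have nBp := normr_ge0 B. have nCp := normr_ge0 C.
  rewrite expr2 mulrA Ab.
  have h1 : 0 <= (`|B| + B) * b by rewrite mulr_ge0 //; lra.
  have Ap : 0 < A by [].
  have h2 : (`|C| + 1 + A) <= (`|C| + 1 + A) * b by rewrite ler_pMr //; lra.
  nra.
by exists (s *: v); rewrite qfun_scale.
Qed.
End M.
Section M2.
Context {R : realType} {n : nat}.
Local Open Scope classical_set_scope.
Local Open Scope ring_scope.

Lemma cont_add (f g : 'rV[R]_n -> R) : continuous f -> continuous g ->
  continuous (fun r => f r + g r).
Proof. by move=> cf cg x; exact: (continuousD (cf x) (cg x)). Qed.

Lemma cont_coordT i : continuous (fun r : 'rV[R]_n => r^T i 0).
Proof.
rewrite (_ : (fun r => _) = (fun r : 'rV[R]_n => r 0 i)); first exact: cont_coord.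
by apply/funext => r; rewrite mxE.
Qed.

Lemma cont_dotT (c : 'cV[R]_n) : continuous (fun r : 'rV[R]_n => dotv c r^T).
Proof.
rewrite (_ : (fun r => _) = (fun r => \sum_(i <- index_enum 'I_n) (fun i r => c i 0 * r^T i 0) i r)).
  apply: cont_sum => i; apply: cont_mul; [exact: cont_cst | exact: cont_coordT].
by apply/funext => r; rewrite dotvE.
Qed.

Lemma cont_dotTT : continuous (fun r : 'rV[R]_n => dotv r^T r^T).
Proof.
rewrite (_ : (fun r => _) = (fun r => \sum_(i <- index_enum 'I_n) (fun i r => r^T i 0 * r^T i 0) i r)).
  by apply: cont_sum => i; apply: cont_mul; exact: cont_coordT.
by apply/funext => r; rewrite dotvE.
Qed.

Lemma cont_qformT (H : 'M[R]_n) : continuous (fun r : 'rV[R]_n => qform H r^T).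
Proof.
rewrite (_ : (fun r => _) = (fun r => \sum_(j <- index_enum 'I_n) (fun j r => \sum_(i <- index_enum 'I_n) (fun i r => r^T i 0 * H i j * r^T j 0) i r) j r)).
  apply: cont_sum => j; apply: cont_sum => i.
  apply: cont_mul; last exact: cont_coordT.
  apply: cont_mul; [exact: cont_coordT | exact: cont_cst].
by apply/funext => r; rewrite qformE bilE.
Qed.

Lemma cont_qfunT H Hp c : continuous (fun r : 'rV[R]_n => qfun H Hp c r^T).
Proof.
apply: cont_add; last exact: cont_cst.
apply: cont_add; [exact: cont_qformT | exact: cont_dotT].
Qed.

Lemma exists_min (H Hp : 'M[R]_n) c z0 : qfun H Hp c z0 = 2^-1 ->
  exists z, qfun H Hp c z = 2^-1 /\
     forall z', qfun H Hp c z' = 2^-1 -> dotv z z <= dotv z' z'.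
Proof.
move=> qz0.
set D := dotv z0 z0.
pose Q := fun r : 'rV[R]_n => qfun H Hp c r^T.
pose G := fun r : 'rV[R]_n => dotv r^T r^T.
pose A := Q @^-1` [set x | x = 2^-1] `&` G @^-1` [set x | x <= D].
have cA : closed A.
  apply: closedI; apply: preimage_closed.
  - by move=> x _; exact: cont_qfunT.
  - exact: closed_eq.
  - by move=> x _; exact: cont_dotTT.
  - exact: closed_le.
have bA : bounded_set A.
  exists (D + 1); split; first exact: num_real.
  move=> M DM r [_ Gr].
  rewrite /= (_ : `|r| = mx_norm r) // mx_normrE.
  have D0 : 0 <= D by exact: dotv_ge0.
  apply: bigmax_le => [|[i j] _]; first lra.
  rewrite (ord1 i) /=.
  have : r 0 j ^+ 2 <= D.
    apply: le_trans Gr; rewrite /G dotvE (bigD1 j) //= !mxE -expr2 lerDl.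
    by apply: sumr_ge0 => k _; rewrite !mxE -expr2 sqr_ge0.
  move=> h; have e := real_normK (num_real (r 0 j)).
  have y0 := normr_ge0 (r 0 j).
  have := sqr_ge0 (`|r 0 j| - 1).
  nra.
have A0 : A !=set0.
  exists z0^T; split; rewrite /= /Q /G trmxK //.
have [r0 r0A r0min] := EVT_min_rV A0 (bounded_closed_compact bA cA)
   (continuous_subspaceT (fun x => cont_dotTT x)).
move: r0A; rewrite inE => -[Qr0 Gr0].
exists r0^T; split; first exact: Qr0.
move=> z' qz'.
case: (lerP (dotv z' z') D) => hz'; last by apply: le_trans Gr0 (ltW hz').
have := r0min z'^T; rewrite /G trmxK; apply.
by rewrite inE; split; rewrite /= /Q /G trmxK.
Qed.

End M2.
Section M3.
Context {R : realType}.
Local Open Scope ring_scope.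

Lemma dotv_eq0 n (u : 'cV[R]_n) : dotv u u = 0 -> u = 0.
Proof.
rewrite dotvE => h; apply/matrixP => i j; rewrite (ord1 j) mxE.
have h2 : forall k : 'I_n, predT k -> 0 <= u k 0 * u k 0.
  by move=> k _; rewrite -expr2 sqr_ge0.
have := @psumr_eq0P R 'I_n predT (fun i => u i 0 * u i 0) h2 h i isT.
by move=> /= /eqP; rewrite mulf_eq0 orbb; move/eqP.
Qed.

Lemma part_i n (H Hp : 'M[R]_n) (c zs u : 'cV[R]_n) :
  qfun H Hp c 0 <= 2^-1 ->
  (forall z', qfun H Hp c z' = 2^-1 -> dotv zs zs <= dotv z' z') ->
  norm2 u <= norm2 zs -> qfun H Hp c u <= 2^-1.
Proof.
move=> q0 zmin.
rewrite /norm2 ler_sqrt; last exact: dotv_ge0.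
move=> uz; rewrite leNgt; apply/negP => qu.
have q1 : qfun H Hp c u = qform H u * 1 ^+ 2 + dotv c u * 1 + qfun H Hp c 0.
  by rewrite -qfun_scale scale1r.
have [s /andP[s0 s1] qs] := @ivt_quad R (qform H u) (dotv c u) (qfun H Hp c 0) 1 ler01 q0 (ltW (eq_ind _ (fun x => 2^-1 < x) qu _ q1)).
rewrite -qfun_scale in qs.
have := zmin _ qs; rewrite dotvZZ => hz.
have du := dotv_ge0 u.
case: (eqVneq s 1) => [s1'|sn1].
  by move: qs; rewrite s1' scale1r => e; move: qu; rewrite e ltxx.
have slt : s < 1 by rewrite lt_neqAle sn1.
have hs : s ^+ 2 < 1 by rewrite expr2; nra.
have d0 : dotv u u = 0 by nra.
by move: qu; rewrite (@dotv_eq0 _ _ d0) => h; move: q0; rewrite leNgt h.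
Qed.

Lemma dot_blk (N nu : nat) (u : 'cV[R]_(N * nu)) :
  dotv u u = \sum_l dotv (blk u l) (blk u l).
Proof.
rewrite dotvE.
rewrite (reindex (uncurry (@mxvec_index N nu))); last first.
  by case: (curry_mxvec_bij N nu) => g h1 h2; exists g => [k _|k _]; [apply: h1|apply: h2].
rewrite (eq_bigr (fun p : 'I_N * 'I_nu => u (mxvec_index p.1 p.2) 0 * u (mxvec_index p.1 p.2) 0)); last by case.
rewrite -(pair_bigA _ (fun l k => u (mxvec_index l k) 0 * u (mxvec_index l k) 0)) /=.
by apply: eq_bigr => l _; rewrite dotvE; apply: eq_bigr => k _; rewrite !mxE.
Qed.

Lemma Uset_dot (N nu : nat) (eps : R) (u : 'cV[R]_(N * nu)) :
  Uset eps u -> dotv u u <= eps * N%:R.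
Proof.
move=> hU; rewrite dot_blk.
apply: le_trans (ler_sum _ (fun l _ => hU l)) _.
by rewrite sumr_const card_ord mulr_natr.
Qed.
End M3.
Section M4.
Context {R : realType} {n : nat}.
Local Open Scope ring_scope.

Lemma conc_term (H Hp : 'M[R]_n) (c u v : 'cV[R]_n) (hh t : R) :
  is_sym_psd H -> is_MP_pinv H Hp -> (exists d, c = H *m d) ->
  qfun H Hp c u <= 2^-1 -> qfun H Hp c v <= 2^-1 -> 0 <= t <= 1 ->
  t * expR (- qform H u - dotv c u - hh) + (1 - t) * expR (- qform H v - dotv c v - hh)
  <= expR (- qform H (t *: u + (1 - t) *: v) - dotv c (t *: u + (1 - t) *: v) - hh).
Proof.
move=> Hs Hm Hc qu qv t01.
set K := 4^-1 * qform Hp c - hh.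
have ex y : - qform H y - dotv c y - hh = - qfun H Hp c y + K.
  by rewrite /K /qfun; ring.
rewrite !ex !(expRD (- qfun H Hp c _) K) mulrA mulrA -mulrDl ler_pM2r ?expR_gt0 //.
have HT := Hs.1.
set w := u - v.
have xe : t *: u + (1 - t) *: v = v + t *: w.
  by apply/matrixP => i j; rewrite /w !mxE; ring.
have ue : u = v + 1 *: w by apply/matrixP => i j; rewrite /w !mxE; ring.
rewrite xe {1}ue !(qfun_line _ _ _ _ _ _ HT).
have := @conc1 R (qform H w) (2 * bil H v w + dotv c w) (qfun H Hp c v) t.
rewrite !expr1n !mulr1.
have -> : qform H w * t ^+ 2 + (2 * bil H v w + dotv c w) * t + qfun H Hp c v =
   qform H w * t ^+ 2 + (2 * bil H v w + dotv c w) * t + qfun H Hp c v by [].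
apply => //.
- by case: Hs.
- move=> s; have := @qfun_ge0 R n H Hp c (v + s *: w) Hs Hm Hc.
  by rewrite (qfun_line _ _ _ _ _ _ HT) [qform _ _ * _]mulrC [_ * s]mulrC.
- by move: qu; rewrite {1}ue (qfun_line _ _ _ _ _ _ HT) !expr1n !mulr1.
Qed.
End M4.

Theorem mainTheorem3 (R : realType) (nu N : nat) (I : finType)
  (eps : R) (H Hp : I -> 'M[R]_(N * nu)) (c : I -> 'cV[R]_(N * nu))
  (h w : I -> R) :
  (0 < nu)%N -> (0 < N)%N -> 0 < eps ->
  (forall k, H k != 0) ->
  (forall k, is_sym_psd (H k)) ->
  (forall k, is_MP_pinv (H k) (Hp k)) ->
  (forall k, exists d, c k = H k *m d) ->
  (forall k, 0 <= w k) ->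
  (forall k, qfun (H k) (Hp k) (c k) 0 <= 2^-1) ->
  (forall k, exists z, qfun (H k) (Hp k) (c k) z = 2^-1 /\
     forall z', qfun (H k) (Hp k) (c k) z' = 2^-1 -> dotv z z <= dotv z' z')
  /\
  forall zs : I -> 'cV[R]_(N * nu),
    (forall k, qfun (H k) (Hp k) (c k) (zs k) = 2^-1 /\
       forall z', qfun (H k) (Hp k) (c k) z' = 2^-1 ->
         dotv (zs k) (zs k) <= dotv z' z') ->
    (forall k u, norm2 u <= norm2 (zs k) ->
       qfun (H k) (Hp k) (c k) u <= 2^-1)
    /\
    ((forall k, Num.sqrt (eps * N%:R) <= norm2 (zs k)) ->
       (forall k u, Uset eps u -> qfun (H k) (Hp k) (c k) u <= 2^-1)
       /\ concave_on (Uset eps) (Ffun w h H c)).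
Proof.
move=> nu0 N0 eps0 Hn0 Hs Hm Hc w0 q0.
split.
  move=> k; have [z0 hz0] := exists_level (H k) (Hp k) (c k) (Hn0 k) (Hs k) (q0 k).
  exact: (exists_min (H k) (Hp k) (c k) z0 hz0).
move=> zs hzs.
have pi : forall k u, norm2 u <= norm2 (zs k) ->
    qfun (H k) (Hp k) (c k) u <= 2^-1.
  by move=> k u; apply: (part_i _ _ _ _ _ _ (q0 k) (hzs k).2).
split => // hb.
have pU : forall k u, Uset eps u -> qfun (H k) (Hp k) (c k) u <= 2^-1.
  move=> k u hU; apply: pi; apply: le_trans (hb k).
  rewrite /norm2 ler_sqrt; first exact: Uset_dot.
  by rewrite mulr_ge0 // ltW.
split => // u v hu hv t t01.
rewrite /Ffun !mulr_sumr -big_split; apply: ler_sum => k _.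
have hc := ler_wpM2l (w0 k) (conc_term (H k) (Hp k) (c k) u v (h k) t (Hs k) (Hm k) (Hc k) (pU k u hu) (pU k v hv) t01).
apply: le_trans _ hc; rewrite le_eqVlt; apply/orP; left; apply/eqP => /=; by rewrite mulrDr mulrCA [(1 - t) * (w k * _)]mulrCA.
Qed.
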